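(* Let $T$ be a tower gadget of height $h\in\mathbb{N}$ contained in a graph $G$ (connected to the rest of $G$ only through $v$ and $w$), and let $M$ be a perfect matching of $G$ such that $T$ is in locked state with respect to $M$. If $(P_1,\dots,P_d)$ is a well-behaved flip sequence for $T$ starting from $M$ such that $T$ is in default state with respect to $M\triangle P_1\triangle\cdots\triangle P_d$, then $d\ge 2h-2$.
   Context: A tower gadget of height $h$ is the induced subgraph on vertices $\{v,w\}\cup\{a_i,b_i: 0\le i\le h\}$ with edge set $\{va_0,b_0w\}\cup\{a_ib_i:0\le i\le h\}\cup\{a_ia_{i-1},b_ib_{i-1}:1\le i\le h\}$. With respect to an edge set $M$: $T$ is in default state if $\{va_0,b_0w\}\cup\{a_ib_i:1\le i\le h\}\subseteq M$; $T$ is locked if $\{va_0,b_0w\}\cup\{a_ib_i:1\le i\le h-2\}\cup\{a_ha_{h-1},b_hb_{h-1}\}\subseteq M$; $T$ is in semi-default state if $va_0,b_0w\in M$. A path is alternating w.r.t. an edge set $S$ if its consecutive edges alternate between belonging and not belonging to $S$ (it may start or end with either kind). A well-behaved flip sequence for $T$ starting from $M$ is a sequence $(P_1,\dots,P_d)$ where each $P_i$ is a path from $v$ to $w$ inside $T$ that is alternating with respect to $M\triangle P_1\triangle\cdots\triangle P_{i-1}$ ($\triangle$ = symmetric difference). *)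

(* Defs.v *)
From mathcomp Require Import all_boot.
Set Implicit Arguments. Unset Strict Implicit. Unset Printing Implicit Defensive.

(* Vertices of a tower gadget of height h:
   inl true = v, inl false = w, inr (i, true) = a_i, inr (i, false) = b_i. *)
Definition TV (h : nat) : finType := (bool + ('I_h.+1 * bool))%type.

Definition tv {h} : TV h := inl true.
Definition tw {h} : TV h := inl false.
Definition ta {h} (i : nat) : TV h := inr (inord i, true).
Definition tb {h} (i : nat) : TV h := inr (inord i, false).

Definition tadj_dir {h} (x y : TV h) : bool :=
  match x, y with
  | inl true, inr (i, true) => (i == 0 :> nat)                 (* v a_0 *)
  | inr (i, false), inl false => (i == 0 :> nat)               (* b_0 w *)
  | inr (i, true), inr (j, false) => (i == j :> nat)           (* a_i b_i *)
  | inr (i, true), inr (j, true) => (i == j.+1 :> nat)         (* a_i a_{i-1} *)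
  | inr (i, false), inr (j, false) => (i == j.+1 :> nat)       (* b_i b_{i-1} *)
  | _, _ => false
  end.

Definition tadj {h} (x y : TV h) : bool := tadj_dir x y || tadj_dir y x.

Section Graphs.
Variable V : finType.

(* edges are unordered pairs, represented as 2-element sets *)
Definition symd (A B : {set {set V}}) : {set {set V}} := (A :\: B) :|: (B :\: A).

Definition is_edge (e : rel V) (E : {set V}) : Prop :=
  exists x y, e x y /\ E = [set x; y].

Definition perfect_matching (e : rel V) (M : {set {set V}}) : Prop :=
  (forall E, E \in M -> is_edge e E) /\
  (forall x : V, #|[set E in M | x \in E]| = 1).

(* T (given by the embedding f of its vertices) is a tower gadget of height h
   which is an induced subgraph of G = (V, e), attached to the rest of G only
   through v and w. *)
Definition tower_in_graph (e : rel V) (h : nat) (f : TV h -> V) : Prop :=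
  injective f /\
  (forall x y : TV h, e (f x) (f y) = tadj x y) /\
  (forall (x : TV h) (u : V), x != tv -> x != tw -> u \notin codom f ->
      ~~ e (f x) u).

Definition tower_edge h (f : TV h -> V) (E : {set V}) : Prop :=
  exists x y : TV h, tadj x y /\ E = [set f x; f y].

Definition fe h (f : TV h -> V) (x y : TV h) : {set V} := [set f x; f y].

Definition default_state h (f : TV h -> V) (M : {set {set V}}) : Prop :=
  fe f tv (ta 0) \in M /\ fe f (tb 0) tw \in M /\
  (forall i, 1 <= i <= h -> fe f (ta i) (tb i) \in M).

Definition locked_state h (f : TV h -> V) (M : {set {set V}}) : Prop :=
  fe f tv (ta 0) \in M /\ fe f (tb 0) tw \in M /\
  (forall i, 1 <= i <= h - 2 -> fe f (ta i) (tb i) \in M) /\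
  fe f (ta h) (ta h.-1) \in M /\ fe f (tb h) (tb h.-1) \in M.

Definition semi_default_state h (f : TV h -> V) (M : {set {set V}}) : Prop :=
  fe f tv (ta 0) \in M /\ fe f (tb 0) tw \in M.

Definition path_edges (p : seq V) : seq {set V} :=
  [seq [set x.1; x.2] | x <- zip p (behead p)].

Definition path_edge_set (p : seq V) : {set {set V}} := [set E in path_edges p].

Definition tower_path h (f : TV h -> V) (p : seq V) : Prop :=
  uniq p /\ head (f tv) p = f tv /\ p != [::] /\ last (f tv) p = f tw /\
  (forall E, E \in path_edges p -> tower_edge f E).

Definition alternating (S : {set {set V}}) (p : seq V) : Prop :=
  forall j, j.+1 < size (path_edges p) ->
    (nth set0 (path_edges p) j \in S) != (nth set0 (path_edges p) j.+1 \in S).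

Fixpoint well_behaved h (f : TV h -> V) (S : {set {set V}}) (Ps : seq (seq V))
  : Prop :=
  match Ps with
  | [::] => True
  | p :: Ps' => tower_path f p /\ alternating S p /\
                well_behaved f (symd S (path_edge_set p)) Ps'
  end.

Definition flip_all (M : {set {set V}}) (Ps : seq (seq V)) : {set {set V}} :=
  foldl (fun S p => symd S (path_edge_set p)) M Ps.

End Graphs.

(* Main.v *)
Require Import Defs.
From mathcomp Require Import all_boot zify.
Set Implicit Arguments. Unset Strict Implicit. Unset Printing Implicit Defensive.

Fixpoint pe (T : finType) (s : seq T) : seq {set T} :=
  match s with
  | x :: ((y :: _) as s') => [set x; y] :: pe s'
  | _ => [::]
  end.

Lemma path_edgesE (V : finType) (s : seq V) : path_edges s = pe s.
Proof.
elim: s => [//|x s IH]; case: s IH => [//|y s] IH /=.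
by rewrite /path_edges /= in IH *; rewrite IH.
Qed.

Lemma pe_sub (T : finType) (s : seq T) X z : X \in pe s -> z \in X -> z \in s.
Proof.
elim: s => [//|x s IH]; case: s IH => [//|y s] IH /=.
rewrite inE => /orP [/eqP -> | /IH H]; last by move=> /H Hz; rewrite inE Hz orbT.
by rewrite !inE => /orP [/eqP ->|/eqP ->]; rewrite eqxx ?orbT.
Qed.

Lemma pe_cat (T : finType) (s t : seq T) x :
  pe (s ++ x :: t) = pe (rcons s x) ++ pe (x :: t).
Proof.
elim: s => [//|a s IH]; case: s IH => [//|b s] IH.
by simpl; simpl in IH; rewrite IH.
Qed.

Lemma set2_eq (T : finType) (a b x y : T) :
  [set a; b] = [set x; y] -> (a = x /\ b = y) \/ (a = y /\ b = x).
Proof.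
move=> E.
have ha : a \in [set x; y] by rewrite -E !inE eqxx.
have hb : b \in [set x; y] by rewrite -E !inE eqxx orbT.
have hx : x \in [set a; b] by rewrite E !inE eqxx.
have hy : y \in [set a; b] by rewrite E !inE eqxx orbT.
move: ha hb hx hy; rewrite !inE => /orP[/eqP ha|/eqP ha] /orP[/eqP hb|/eqP hb]
  /orP[/eqP hx|/eqP hx] /orP[/eqP hy|/eqP hy]; subst; auto.
Qed.

Lemma pe_map_mem (T V : finType) (f : T -> V) (s : seq T) x y :
  injective f -> [set f x; f y] \in pe (map f s) -> [set x; y] \in pe s.
Proof.
move=> inj; elim: s => [//|a s IH]; case: s IH => [//|b s] IH /=.
rewrite inE => /orP [/eqP E | /IH H]; last by rewrite inE H orbT.
case: (set2_eq E) => [[/inj -> /inj ->]|[/inj -> /inj ->]].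
  by rewrite inE eqxx.
by rewrite inE [X in X == _]setUC eqxx.
Qed.

Lemma mem_pe (T : finType) (s : seq T) z :
  1 < size s -> z \in s -> exists2 X, X \in pe s & z \in X.
Proof.
elim: s => [//|a s IH]; case: s IH => [//|b s] IH _ /=.
rewrite inE => /orP [/eqP ->|H].
  by exists [set a; b]; rewrite ?inE ?eqxx.
case: s IH H => [|c s] IH H.
  by exists [set a; b]; rewrite ?inE ?eqxx //; move: H; rewrite inE => ->; rewrite orbT.
have [X HX HzX] := IH isT H.
by exists X; rewrite // inE HX orbT.
Qed.

Lemma local_alt (V : finType) (S : {set {set V}}) (p : seq V) (u : V) :
  uniq p -> alternating S p -> u \in p -> u != head u p ->
  u != last u p ->
  exists E1 E2, E1 \in pe p /\ E2 \in pe p /\ u \in E1 /\ u \in E2 /\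
    E1 \in S /\ E2 \notin S /\
    (forall E, E \in pe p -> u \in E -> E = E1 \/ E = E2).
Proof.
move=> Hu Halt up; case/splitPr: up Hu Halt => l1 l2.
case/lastP: l1 => [|l1 x]; first by rewrite /= eqxx.
case: l2 => [|y l2]; first by rewrite last_cat /= eqxx.
rewrite cat_rcons => Hu Halt _ _.
have pE : pe (l1 ++ x :: u :: y :: l2) =
   pe (rcons l1 x) ++ [set x; u] :: [set u; y] :: pe (y :: l2) by rewrite pe_cat.
move: Hu; rewrite cat_uniq => /and3P [_ Hh Hu2].
have ul1 : u \notin rcons l1 x.
  rewrite mem_rcons inE negb_or; move: Hu2 => /= /andP [].
  rewrite !inE negb_or => /andP [xu _] _; rewrite eq_sym xu /=.
  by apply/negP => ul; move: Hh => /hasPn /(_ u); rewrite !inE eqxx orbT => /(_ isT); rewrite ul.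
have ul2 : u \notin y :: l2 by move: Hu2 => /= /and3P [].
have onlyE : forall E, E \in pe (l1 ++ x :: u :: y :: l2) -> u \in E ->
     E = [set x; u] \/ E = [set u; y].
  move=> E; rewrite pE mem_cat !inE => /orP [H|/orP [/eqP ->|/orP [/eqP ->|H]]] uE; auto.
    by move: (pe_sub H uE); rewrite (negbTE ul1).
  by move: (pe_sub H uE); rewrite (negbTE ul2).
have alt : ([set x; u] \in S) != ([set u; y] \in S).
  move: (Halt (size (pe (rcons l1 x)))); rewrite path_edgesE pE !nth_cat ltnn subnn.
  set n := size (pe (rcons l1 x)).
  rewrite (_ : n.+1 < n = false); last by apply/negbTE; rewrite -leqNgt leqnSn.
  rewrite subSnn /=; apply.
  by rewrite /n size_cat /=; lia.
have i1 : [set x; u] \in pe (l1 ++ x :: u :: y :: l2) by rewrite pE mem_cat !inE eqxx orbT.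
have i2 : [set u; y] \in pe (l1 ++ x :: u :: y :: l2) by rewrite pE mem_cat !inE eqxx !orbT.
have u1 : u \in [set x; u] by rewrite !inE eqxx orbT.
have u2 : u \in [set u; y] by rewrite !inE eqxx.
case h1: ([set x; u] \in S) in alt.
  have h2 : [set u; y] \notin S by move: alt; case: ([set u; y] \in S).
  by exists [set x; u], [set u; y]; do !split => //.
have h2 : [set u; y] \in S by move: alt; case: ([set u; y] \in S).
by exists [set u; y], [set x; u]; do !split => //; rewrite ?h1 // => E H1 H2;
  case: (onlyE E H1 H2); auto.
Qed.

Lemma deg_flip (V : finType) (S : {set {set V}}) (p : seq V) (u : V) :
  uniq p -> alternating S p -> u != head u p -> u != last u p ->
  #|[set E in symd S (path_edge_set p) | u \in E]| = #|[set E in S | u \in E]|.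
Proof.
move=> Hu Halt uh ul.
have PE : forall E, (E \in path_edge_set p) = (E \in pe p).
  by move=> E; rewrite /path_edge_set inE path_edgesE.
case: (boolP (u \in p)) => up.
  have [E1 [E2 [i1 [i2 [u1 [u2 [s1 [s2 only]]]]]]]] := local_alt Hu Halt up uh ul.
  have -> : [set E in symd S (path_edge_set p) | u \in E] =
            E2 |: ([set E in S | u \in E] :\ E1).
    apply/setP => E; rewrite /symd !inE path_edgesE.
    case: (boolP (E \in pe p)) => EP; case: (boolP (u \in E)) => uE;
      rewrite ?andbT ?andbF ?orbF //=.
    - case: (only E EP uE) => ->; last by rewrite eqxx (negbTE s2).
      have ne12 : (E1 == E2) = false by apply/eqP => h; move: s2; rewrite -h s1.
      by rewrite ne12 s1 eqxx.
    - by apply/esym/eqP => h; rewrite h u2 in uE.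
    - have -> : (E == E2) = false by apply/eqP => h; rewrite h i2 in EP.
      have -> : (E == E1) = false by apply/eqP => h; rewrite h i1 in EP.
      by [].
    - by apply/esym/eqP => h; rewrite h u2 in uE.
  by rewrite cardsU1 (cardsD1 E1 [set E in S | u \in E]) !inE s1 u1 (negbTE s2) andbF.
apply: eq_card => E; rewrite /symd !inE path_edgesE.
case: (boolP (u \in E)) => uE; rewrite ?andbT ?andbF //.
have -> : (E \in pe p) = false.
  by apply/negbTE/negP => EP; move: (pe_sub EP uE); rewrite (negbTE up).
by rewrite andbF orbF.
Qed.


Lemma tadjC h (x y : TV h) : tadj x y = tadj y x.
Proof. by rewrite /tadj orbC. Qed.

Lemma taK h i : i <= h -> nat_of_ord (@inord h i) = i.
Proof. by move=> ih; rewrite inordK // ltnS. Qed.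

Lemma ta_inj h i j : i <= h -> j <= h -> @ta h i = ta j -> i = j.
Proof. by move=> ih jh [] /(congr1 (@nat_of_ord _)); rewrite !taK. Qed.
Lemma tb_inj h i j : i <= h -> j <= h -> @tb h i = tb j -> i = j.
Proof. by move=> ih jh [] /(congr1 (@nat_of_ord _)); rewrite !taK. Qed.

Lemma ta_val h (j : 'I_h.+1) : inr (j, true) = @ta h j.
Proof. by rewrite /ta inord_val. Qed.
Lemma tb_val h (j : 'I_h.+1) : inr (j, false) = @tb h j.
Proof. by rewrite /tb inord_val. Qed.

Lemma nbrA h i (y : TV h) : i <= h -> tadj (ta i) y ->
  (y = ta i.+1 /\ i < h) \/ (y = ta i.-1 /\ 0 < i) \/ y = tb i \/ (y = tv /\ i = 0).
Proof.
move=> ih; rewrite /tadj /ta.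
case: y => [[|]|[j [|]]] /=; rewrite ?taK //.
- by move/eqP => ->; do 3 right.
- case/orP => /eqP E.
    by right; left; rewrite E /= inord_val.
  left; split; first by rewrite -E inord_val.
  by have := ltn_ord j; rewrite E ltnS.
- by rewrite orbF => /eqP E; right; right; left; rewrite /tb E inord_val.
Qed.

Lemma nbrB h i (y : TV h) : i <= h -> tadj (tb i) y ->
  (y = tb i.+1 /\ i < h) \/ (y = tb i.-1 /\ 0 < i) \/ y = ta i \/ (y = tw /\ i = 0).
Proof.
move=> ih; rewrite /tadj /tb.
case: y => [[|]|[j [|]]] /=; rewrite ?taK ?orbF //.
- by move/eqP => ->; do 3 right.
- by move/eqP => E; right; right; left; rewrite /ta -E inord_val.
- case/orP => /eqP E.
    by right; left; rewrite E /= inord_val.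
  left; split; first by rewrite -E inord_val.
  by have := ltn_ord j; rewrite E ltnS.
Qed.

Lemma nbrV h (y : TV h) : tadj tv y -> y = ta 0.
Proof.
case: y => [[|]|[j [|]]] //=; rewrite /tadj /= ?orbF => /eqP E.
by rewrite /ta -E inord_val.
Qed.

Lemma nbrW h (y : TV h) : tadj tw y -> y = tb 0.
Proof.
case: y => [[|]|[j [|]]] //=; rewrite /tadj /= ?orbF => /eqP E.
by rewrite /tb -E inord_val.
Qed.


Definition upper h (i : nat) (y : TV h) := if y is inr (j, _) then i < j else false.

Lemma nbr_upper h i (x y : TV h) : upper i x -> tadj x y ->
  upper i y \/ y = ta i \/ y = tb i.
Proof.
case: x => [[|]|[j c]] //= ij.
case: y => [[|]|[j' c']] /=.
- by case: c; rewrite /tadj /= ?orbF // => /eqP E; lia.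
- by case: c; rewrite /tadj /= ?orbF // => /eqP E; lia.
- case: (ltnP i j') => hj'; first by left.
  move=> H; right; move: H; destruct c, c'; rewrite /tadj /= ?orbF => H.
  + left; rewrite ta_val (_ : (j' : nat) = i) //; move: H => /orP [] /eqP; lia.
  + right; rewrite tb_val (_ : (j' : nat) = i) //; move: H => /eqP; lia.
  + left; rewrite ta_val (_ : (j' : nat) = i) //; move: H => /eqP; lia.
  + right; rewrite tb_val (_ : (j' : nat) = i) //; move: H => /orP [] /eqP; lia.
Qed.

Lemma trap h i (x : TV h) s : upper i x -> path tadj x s -> ta i \notin s ->
  tb i \notin s -> upper i (last x s).
Proof.
elim: s x => [//|y s IH] x ux /= /andP [axy ps].
rewrite !inE !negb_or => /andP [ay ai] /andP [bya bi].
apply: IH => //.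
by case: (nbr_upper ux axy) => [//|[E|E]]; move: ay bya; rewrite E eqxx.
Qed.

Definition is_a h (y : TV h) := if y is inr (_, true) then true else false.

Lemma scanB h : forall s i, i <= h -> path tadj (@tb h i) s -> uniq (tb i :: s) ->
  (forall j, j <= i -> ta j \notin s) -> last (tb i) s = tw ->
  all (fun y => ~~ is_a y) s.
Proof.
elim => [//|y s IH] i ih /= /andP [ay ps] /andP [ni us] na lst.
case: (nbrB ih ay) => [[E ilt]|[[E ipos]|[E|[E i0]]]]; subst y.
- have := @trap h i (tb i.+1) s.
  rewrite /= taK // ltnSn lst /= => H; suff : false by []; apply: H => //.
    by move: (na i (leqnn i)); rewrite inE negb_or => /andP [].
  by move: ni; rewrite inE negb_or => /andP [].
  apply: (IH i.-1) => //.
  + exact: leq_trans (leq_pred i) ih.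
  + move=> j jl; move: (na j (leq_trans jl (leq_pred i))).
    by rewrite inE negb_or => /andP [].
- by move: (na i (leqnn i)); rewrite inE eqxx.
- case: s ps ni lst {IH us na} => [//|z s] /= /andP [/nbrW -> _].
  by rewrite !inE i0 eqxx orbT.
Qed.

Lemma setab_mem h (x y : TV h) j : [set ta j; tb j] = [set x; y] -> ta j = x \/ ta j = y.
Proof.
move=> E; have : ta j \in [set x; y] by rewrite -E !inE eqxx.
by rewrite !inE => /orP [] /eqP; auto.
Qed.

Lemma setb_mem h (x y : TV h) j : [set ta j; tb j] = [set x; y] -> tb j = x \/ tb j = y.
Proof.
move=> E; have : tb j \in [set x; y] by rewrite -E !inE eqxx orbT.
by rewrite !inE => /orP [] /eqP; auto.
Qed.

Lemma scanA h : forall s i, i <= h -> path tadj (@ta h i) s -> uniq (ta i :: s) ->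
  (forall j, j < i -> ta j \notin s) -> tv \notin s -> last (ta i) s = tw ->
  exists k, [/\ i <= k, k <= h,
    (forall j, j <= h -> [set ta j; tb j] \in pe (ta i :: s) -> j = k) &
    (forall j, i <= j <= k -> ta j \in ta i :: s)].
Proof.
elim => [|y s IH] i ih; first by move=> _ _ _ _; rewrite /= /ta /tw => -[].
move=> /= /andP [ay ps] /andP [ni us] na nv lst.
case: (nbrA ih ay) => [[E ilt]|[[E ipos]|[E|[E i0]]]]; subst y.
- have [|k [ik kh rk mk]] := IH i.+1 ilt ps us _ nv lst.
    move=> j; rewrite ltnS leq_eqVlt => /orP [/eqP ->|jl].
      by move: ni; rewrite inE negb_or => /andP [].
    by move: (na j jl); rewrite inE negb_or => /andP [].
  exists k; split => //; first exact: ltnW.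
    move=> j jh; rewrite inE => /orP [/eqP E|]; last exact: rk.
    by case: (setb_mem E); rewrite /ta /tb => -[].
  move=> j /andP [ij jk]; case: (eqVneq j i) => [->|ji]; first by rewrite inE eqxx.
  by rewrite inE mk ?orbT // jk andbT ltn_neqAle eq_sym ji ij.
- by have := na i.-1; rewrite ltn_predL ipos inE eqxx => /(_ isT).
- have := @scanB h s i ih ps us _ lst.
  have na' : forall j, j <= i -> ta j \notin s.
    move=> j; rewrite leq_eqVlt => /orP [/eqP ->|jl].
      by move: ni; rewrite inE negb_or => /andP [].
    by move: (na j jl); rewrite inE negb_or => /andP [].
  move=> /(_ na') /allP al.
  exists i; split => //.
    move=> j jh; rewrite inE => /orP [/eqP E|H].
      case: (setab_mem E) => // /ta_inj; apply => //.
    have tj : @ta h j \in [set ta j; tb j] by rewrite !inE eqxx.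
    have H' : [set ta j; tb j] \in pe (tb i :: s) := H.
    have := pe_sub H' tj; rewrite inE.
    by case/orP => [/eqP|/al]; rewrite /ta /tb.
  move=> j /andP [ij ji]; have -> : j = i by apply/eqP; rewrite eqn_leq ij ji.
  by rewrite inE eqxx.
- by move: nv; rewrite inE eqxx.
Qed.

Lemma tstruct h (s : seq (TV h)) : path tadj tv s -> uniq (tv :: s) -> last tv s = tw ->
  exists k, [/\ k <= h,
    (forall j, j <= h -> [set ta j; tb j] \in pe (tv :: s) -> j = k) &
    (forall j, j <= k -> ta j \in s)].
Proof.
case: s => [|y s]; first by move=> _ _ [].
move=> /= /andP [/nbrV E ps] /andP [nv us] lst; subst y.
have nv' : tv \notin s by move: nv; rewrite inE negb_or => /andP [].
have [k [_ kh rk mk]] := @scanA h s 0 (leq0n h) ps us (fun j (hj : j < 0) => match notF hj with end) nv' lst.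
exists k; split => //.
  move=> j jh; rewrite inE => /orP [/eqP E|]; last exact: rk.
  by case: (setb_mem E); rewrite /ta /tb => -[].
Qed.

Lemma lift_map (T V : finType) (f : T -> V) (p : seq V) :
  (forall z, z \in p -> z \in codom f) -> exists q, p = map f q.
Proof.
elim: p => [|z p IH] H; first by exists [::].
have [|q ->] := IH; first by move=> x xp; apply: H; rewrite inE xp orbT.
have /codomP [x ->] := H z (mem_head z p).
by exists (x :: q).
Qed.

Lemma lift_path (V : finType) h (f : TV h -> V) (s : seq (TV h)) x :
  injective f -> (forall E, E \in pe (map f (x :: s)) -> tower_edge f E) -> path tadj x s.
Proof.
move=> inj; elim: s x => [//|y s IH] x H /=; apply/andP; split; last first.
  by apply: IH => E HE; apply: H; rewrite /= inE HE orbT.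
have [a [b [ab E]]] : tower_edge f [set f x; f y] by apply: H; rewrite /= inE eqxx.
case: (set2_eq E) => [[/inj -> /inj ->]|[/inj -> /inj ->]] //.
by rewrite tadjC.
Qed.

Lemma tpath_struct (V : finType) (e : rel V) h (f : TV h -> V) (p : seq V) :
  tower_in_graph e f -> tower_path f p ->
  exists s k, [/\ p = map f (tv :: s), k <= h,
    (forall j, j <= h -> fe f (ta j) (tb j) \in path_edge_set p -> j = k) &
    (forall j, j <= k -> f (ta j) \in p)].
Proof.
move=> [inj _] [up [hd [ne [lst edges]]]].
rewrite path_edgesE in edges.
have sz : 1 < size p.
  case: p up hd ne lst edges => [//|x [|y p]] //= _ -> _ /inj; by rewrite /tv /tw.
have [q pq] : exists q, p = map f q.
  apply: lift_map => z zp; have [X XP zX] := mem_pe sz zp.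
  have [a [b [_ XE]]] := edges X XP; move: zX; rewrite XE !inE.
  by case/orP => /eqP ->; apply: codom_f.
subst p; case: q up hd ne lst edges sz => [//|y s] up /= /inj hy _ lst edges _; subst y.
rewrite last_map in lst; move/inj: lst => lst.
have ps : path tadj tv s by apply: (lift_path inj) => E HE; apply: edges.
have us : uniq (tv :: s) by rewrite -(map_inj_uniq inj).
have [k [kh rk mk]] := tstruct ps us lst.
exists s, k; split => //.
  move=> j jh; rewrite /path_edge_set inE path_edgesE /fe => H; apply: rk => //; exact: (@pe_map_mem _ _ f (tv :: s) _ _ inj H).
by move=> j jk; rewrite inE map_f ?orbT // mk.
Qed.


Lemma wb_nth (V : finType) h (f : TV h -> V) M Ps : well_behaved f M Ps ->
  forall t, t < size Ps ->
  tower_path f (nth [::] Ps t) /\ alternating (flip_all M (take t Ps)) (nth [::] Ps t).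
Proof.
elim: Ps M => [//|p Ps IH] M /= [tp [al wb]] [|t] //= ts.
exact: IH.
Qed.

Lemma st_succ (V : finType) (M : {set {set V}}) Ps t : t < size Ps ->
  flip_all M (take t.+1 Ps) =
  symd (flip_all M (take t Ps)) (path_edge_set (nth [::] Ps t)).
Proof. by move=> ts; rewrite (take_nth [::]) // /flip_all foldl_rcons. Qed.

Definition INV (V : finType) h (f : TV h -> V) (S : {set {set V}}) :=
  forall x : TV h, x != tv -> x != tw -> #|[set E in S | f x \in E]| = 1.

Lemma INV_uniq (V : finType) h (f : TV h -> V) (S : {set {set V}}) x E E' : INV f S ->
  x != tv -> x != tw -> E \in S -> E' \in S -> f x \in E -> f x \in E' -> E = E'.
Proof.
move=> I xv xw ES ES' xE xE'; have /cards1P [z Z] := introT eqP (I x xv xw).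
have : E \in [set z] by rewrite -Z inE ES xE.
have : E' \in [set z] by rewrite -Z inE ES' xE'.
by rewrite !inE => /eqP -> /eqP ->.
Qed.

Lemma tpath_cons (V : finType) h (f : TV h -> V) p : tower_path f p ->
  exists p', p = f tv :: p' /\ last (f tv) p' = f tw.
Proof.
case: p => [|a p'] [_ [hd [ne [lst _]]]] //.
by move: hd lst => /= ->; exists p'.
Qed.

Lemma INV_flip (V : finType) (e : rel V) h (f : TV h -> V) (S : {set {set V}}) p :
  tower_in_graph e f -> tower_path f p -> alternating S p -> INV f S ->
  INV f (symd S (path_edge_set p)).
Proof.
move=> [inj _] tp al I x xv xw.
have [p' [pE lst]] := tpath_cons tp.
have up : uniq p by case: tp.
rewrite deg_flip //; first exact: I.
  by rewrite pE /=; apply/eqP => /inj /eqP; rewrite (negbTE xv).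
by rewrite pE /= lst; apply/eqP => /inj /eqP; rewrite (negbTE xw).
Qed.

Definition R (V : finType) h (f : TV h -> V) (S : {set {set V}}) :=
  #|[set i : 'I_h.+1 | fe f (ta i) (tb i) \in S]|.

Lemma R_step (V : finType) h (f : TV h -> V) (S P : {set {set V}}) :
  (forall i j : 'I_h.+1, fe f (ta i) (tb i) \in P -> fe f (ta j) (tb j) \in P -> i = j) ->
  R f (symd S P) <= R f S + 1 /\ R f S <= R f (symd S P) + 1.
Proof.
move=> H.
set K := [set i : 'I_h.+1 | fe f (ta i) (tb i) \in P].
have K1 : #|K| <= 1 by apply/card_le1_eqP => i j; rewrite !inE => Hi Hj; apply: H.
split.
  apply: leq_trans (_ : #|[set i : 'I_h.+1 | fe f (ta i) (tb i) \in S] :|: K| <= _).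
    apply: subset_leq_card; apply/subsetP => i; rewrite !inE.
    by case: (_ \in S); case: (_ \in P).
  by apply: leq_trans (leq_card_setU _ _) _; rewrite leq_add2l.
apply: leq_trans (_ : #|[set i : 'I_h.+1 | fe f (ta i) (tb i) \in symd S P] :|: K| <= _).
  apply: subset_leq_card; apply/subsetP => i; rewrite !inE.
  by case: (_ \in S); case: (_ \in P).
by apply: leq_trans (leq_card_setU _ _) _; rewrite leq_add2l.
Qed.

Lemma cardR (V : finType) h (f : TV h -> V) (S : {set {set V}}) m : m <= h ->
  (forall i, 1 <= i <= m -> fe f (ta i) (tb i) \in S) -> m <= R f S.
Proof.
move=> mh H.
have inj : injective (fun i : 'I_m => (inord i.+1 : 'I_h.+1)).
  move=> i j E; apply: ord_inj; have hi := ltn_ord i; have hj := ltn_ord j.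
  by move: (congr1 (@nat_of_ord _) E); rewrite !inordK ?ltnS; lia.
apply: (@leq_trans #|predT : pred 'I_m|); first by rewrite card_ord.
rewrite -(card_imset predT inj).
apply: subset_leq_card; apply/subsetP => z /imsetP [i _ ->]; rewrite inE.
have hi := ltn_ord i; rewrite inordK ?ltnS; last lia.
apply: H; lia.
Qed.

Lemma exists_switch (g : nat -> bool) d : ~~ g 0 -> g d -> exists t, t < d /\ ~~ g t /\ g t.+1.
Proof.
elim: d => [|d IH] g0 gd; first by rewrite gd in g0.
case: (boolP (g d)) => gd'.
  by have [t [td H]] := IH g0 gd'; exists t; split => //; exact: ltnW.
by exists d.
Qed.

Theorem mainTheorem7 (V : finType) (e : rel V)
  (e_sym : symmetric e) (e_irr : irreflexive e)
  (h : nat) (f : TV h -> V) (M : {set {set V}}) (Ps : seq (seq V)) :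
  tower_in_graph e f ->
  perfect_matching e M ->
  locked_state f M ->
  well_behaved f M Ps ->
  default_state f (flip_all M Ps) ->
  2 * h <= size Ps + 2.
Proof.
move=> tig pm lk wb df.
case: (leqP h 1) => hle; first lia.
have inj : injective f by case: tig.
pose S t := flip_all M (take t Ps).
have S0 : S 0 = M by rewrite /S take0.
have Sd : S (size Ps) = flip_all M Ps by rewrite /S take_size.
have stepP : forall t, t < size Ps ->
  tower_path f (nth [::] Ps t) /\ alternating (S t) (nth [::] Ps t) := wb_nth wb.
have Ssucc : forall t, t < size Ps ->
  S t.+1 = symd (S t) (path_edge_set (nth [::] Ps t)) := fun t => @st_succ V M Ps t.
have INVt : forall t, t <= size Ps -> INV f (S t).
  elim => [_|t IH td]; first by move=> x _ _; rewrite S0; exact: pm.2.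
  rewrite Ssucc //; have [tp al] := stepP t td.
  apply: (INV_flip (S := S t) tig tp al); exact: IH (ltnW td).
have rung1 : forall t, t < size Ps -> forall i j : 'I_h.+1,
    fe f (ta i) (tb i) \in path_edge_set (nth [::] Ps t) ->
    fe f (ta j) (tb j) \in path_edge_set (nth [::] Ps t) -> i = j.
  move=> t td i j Hi Hj; have [tp _] := stepP t td.
  have [s [k [_ kh rk _]]] := tpath_struct tig tp.
  have ih : (i <= h)%N by rewrite -ltnS ltn_ord.
  have jh : (j <= h)%N by rewrite -ltnS ltn_ord.
  by apply: ord_inj; rewrite (rk i ih Hi) (rk j jh Hj).
have chain : forall a b, a <= b <= size Ps ->
    R f (S a) <= R f (S b) + (b - a) /\ R f (S b) <= R f (S a) + (b - a).
  move=> a; elim => [|b IH] /andP [ab bd].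
    by move: ab; rewrite leqn0 => /eqP ->; rewrite subnn !addn0.
  case: (eqVneq a b.+1) => [->|ne]; first by rewrite subnn !addn0.
  have [IH1 IH2] : R f (S a) <= R f (S b) + (b - a) /\ R f (S b) <= R f (S a) + (b - a).
    by apply: IH; apply/andP; split; [rewrite -ltnS ltn_neqAle ne ab | exact: ltnW].
  have [R1 R2] := R_step (S b) (rung1 b bd).
  rewrite Ssucc //.
  have ab' : a <= b by rewrite -ltnS ltn_neqAle ne ab.
  move: R1 R2 IH1 IH2 ab'.
  set x := R f (symd _ _); set y := R f (S b); set z := R f (S a).
  move=> R1 R2 IH1 IH2 ab'; rewrite subSn //; lia.
set rh := fe f (ta h) (tb h).
have nM : rh \notin M.
  apply/negP => H; case: lk => [_ [_ [_ [ah _]]]].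
  have E := INV_uniq (INVt 0 (leq0n _)) (x := ta h) isT isT; rewrite S0 in E.
  have := E _ _ ah H; rewrite /fe !inE eqxx => /(_ isT isT) E'.
  have : f (tb h) \in [set f (ta h); f (ta h.-1)] by rewrite E' !inE eqxx orbT.
  by rewrite !inE => /orP [] /eqP /inj; rewrite /ta /tb.
have inD : rh \in S (size Ps).
  by rewrite Sd; case: df => [_ [_ D]]; apply: D; rewrite leqnn andbT; lia.
have [t [td [nt yt]]] : exists t, t < size Ps /\ ~~ (rh \in S t) /\ rh \in S t.+1.
  by apply: (@exists_switch (fun t => rh \in S t)); rewrite ?S0.

have [tp al] := stepP t td.
set p := nth [::] Ps t in tp al Ssucc yt.
have rP : rh \in path_edge_set p.
  by move: yt; rewrite Ssucc // !inE (negbTE nt) andbF.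
have [s [k [pE kh rk mk]]] := tpath_struct tig tp.
have kE : k = h by apply/esym/rk.
have noR : forall i, i < h -> fe f (ta i) (tb i) \notin path_edge_set p.
  by move=> i ih; apply/negP => /rk; rewrite kE => /(_ (ltnW ih)) E; rewrite E ltnn in ih.
have [p' [pE' lst]] := tpath_cons tp.
have up : uniq p by case: tp.
have z0 : forall i, i < h -> fe f (ta i) (tb i) \notin S t /\ fe f (ta i) (tb i) \notin S t.+1.
  move=> i ih.
  have ui : f (ta i) \in p by apply: mk; rewrite kE ltnW.
  have uh : f (ta i) != head (f (ta i)) p by rewrite pE' /=; apply/eqP => /inj; rewrite /ta /tv.
  have ul : f (ta i) != last (f (ta i)) p by rewrite pE' /= lst; apply/eqP => /inj; rewrite /ta /tw.
  have [E1 [E2 [i1 [i2 [u1 [u2 [s1 [s2 _]]]]]]]] := local_alt up al ui uh ul.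
  have ur : f (ta i) \in fe f (ta i) (tb i) by rewrite !inE eqxx.
  split; apply/negP => H.
    have := INV_uniq (INVt t (ltnW td)) (x := ta i) isT isT H s1 ur u1 => EE.
    by move: (noR i ih); rewrite EE /path_edge_set inE path_edgesE i1.
  have s2' : E2 \in S t.+1 by rewrite Ssucc // !inE s2 /= path_edgesE i2 orbT.
  have := INV_uniq (INVt t.+1 td) (x := ta i) isT isT H s2' ur u2 => EE.
  by move: (noR i ih); rewrite EE /path_edge_set inE path_edgesE i2.
have Rt : R f (S t) = 0.
  apply/eqP; rewrite cards_eq0; apply/eqP/setP => i; rewrite !inE.
  have := ltn_ord i; rewrite ltnS leq_eqVlt => /orP [/eqP ->|ih]; first exact: negbTE.
  by apply/negbTE; case: (z0 i ih).
have Rt1 : R f (S t.+1) <= 1.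
  rewrite -(cards1 (ord_max : 'I_h.+1)); apply: subset_leq_card; apply/subsetP => i.
  rewrite !inE; have := ltn_ord i; rewrite ltnS leq_eqVlt => /orP [/eqP E|ih].
    by move=> _; apply/eqP/ord_inj; rewrite E.
  by case: (z0 i ih) => _ /negbTE ->.
have RM : h - 2 <= R f (S 0).
  rewrite S0; apply: cardR; first lia.
  by case: lk => [_ [_ [L _]]].
have RD : h <= R f (S (size Ps)).
  rewrite Sd; apply: cardR => //; by case: df => [_ [_ D]].
have [C1 _] : R f (S 0) <= R f (S t) + (t - 0) /\ R f (S t) <= R f (S 0) + (t - 0).
  by apply: chain; rewrite leq0n ltnW.
have [_ C2] : R f (S t.+1) <= R f (S (size Ps)) + (size Ps - t.+1) /\ R f (S (size Ps)) <= R f (S t.+1) + (size Ps - t.+1).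
  by apply: chain; rewrite td leqnn.
move: RM RD C1 C2 Rt Rt1 td.
set r0 := R f (S 0); set rd := R f (S (size Ps)); set rt := R f (S t); set rt1 := R f (S t.+1).
move=> *; lia.
Qed.
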